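(* Let $q$ be a prime power and $n\ge 3$. Let $\mathcal{L}$ be a set of lines of $\mathrm{AG}(n,q)$ such that for some $x$, every line spread $\mathcal{S}$ of $\mathrm{AG}(n,q)$ satisfies $|\mathcal{L}\cap\mathcal{S}|=x$. Then $\mathcal{L}$ is a Cameron-Liebler line class of $\mathrm{AG}(n,q)$ with parameter $x$.
   Context: $\mathrm{AG}(n,q)$ is $\mathrm{PG}(n,q)$ with a hyperplane $\pi_\infty$ removed; affine points are points outside $\pi_\infty$, (affine) lines are projective lines not contained in $\pi_\infty$. A line spread of $\mathrm{AG}(n,q)$ is a set of affine lines pairwise sharing no affine point and covering all affine points. With $A_n$ the incidence matrix of affine points versus affine lines, a set $\mathcal{L}$ of affine lines is a Cameron-Liebler line class of $\mathrm{AG}(n,q)$ if its characteristic vector lies in the real row space $\mathrm{Im}(A_n^T)$; its parameter is $|\mathcal{L}|(q-1)/(q^n-1)$. *)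

(* Defs.v *)
(* AG(n,q) modelled as the vector space F^n over a finite field F
   with q = #|F| elements: affine points are row vectors, affine lines are the sets
   {a + t d | t in F} with d <> 0. *)
From HB Require Import structures.
From mathcomp Require Import all_boot all_order all_algebra.
From mathcomp Require Import reals.
Set Implicit Arguments. Unset Strict Implicit. Unset Printing Implicit Defensive.
Import Order.TTheory GRing.Theory Num.Theory.
Local Open Scope ring_scope.

Section AffineSpace.
Variables (F : finFieldType) (n : nat).

Definition apoint := 'rV[F]_n.

Definition is_aline (l : {set 'rV[F]_n}) : bool :=
  [exists a : 'rV[F]_n, exists d : 'rV[F]_n,
     (d != 0) && (l == [set a + t *: d | t : F])].

Definition line_spread (S : {set {set 'rV[F]_n}}) : Prop :=
  (forall l, l \in S -> is_aline l) /\ trivIset S /\ cover S = [set: 'rV[F]_n].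

Definition incidence (R : realType) (p : 'rV[F]_n) (l : {set 'rV[F]_n}) : R :=
  (p \in l)%:R.
Definition charvec (R : realType) (L : {set {set 'rV[F]_n}}) (l : {set 'rV[F]_n}) : R :=
  (l \in L)%:R.

(* chi_L lies in the real row space Im(A_n^T): chi_L = A_n^T w for some real w
   indexed by affine points (coordinates indexed by the affine lines). *)
Definition CL_class (R : realType) (L : {set {set 'rV[F]_n}}) : Prop :=
  exists w : 'rV[F]_n -> R, forall l, is_aline l ->
    charvec R L l = \sum_(p : 'rV[F]_n) incidence R p l * w p.

Definition CL_parameter (R : realType) (L : {set {set 'rV[F]_n}}) : R :=
  (#|L|%:R * (#|F|%:R - 1)) / (#|F|%:R ^+ n - 1).

End AffineSpace.

(* Main.v *)
Require Import Defs.
From HB Require Import structures.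
From mathcomp Require Import all_boot all_order all_algebra.
From mathcomp Require Import reals zify ring.
Import Order.TTheory GRing.Theory Num.Theory.
Set Implicit Arguments. Unset Strict Implicit. Unset Printing Implicit Defensive.
Local Open Scope ring_scope.

Section Geo.
Variables (F : finFieldType) (n : nat).
Local Notation V := 'rV[F]_n.

Definition line (a d : V) : {set V} := [set a + t *: d | t : F].
Definition pe (e : V) : {set {set V}} := [set line b e | b : V].
Definition col (d e : V) : bool := [exists c : F, e == c *: d].

Lemma memlP (a d p : V) : reflect (exists t, p = a + t *: d) (p \in line a d).
Proof.
apply: (iffP imsetP) => [[t _ ->]|[t ->]]; first by exists t.
by exists t.
Qed.

Lemma line_id (a d : V) : a \in line a d.
Proof. by apply/memlP; exists 0; rewrite scale0r addr0. Qed.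

Lemma line_shift (a d p : V) : p \in line a d -> line p d = line a d.
Proof.
move=> /memlP [t0 ->]; apply/setP => y; apply/memlP/memlP => [[s ->]|[s ->]].
  by exists (t0 + s); rewrite scalerDl addrA.
by exists (s - t0); rewrite scalerBl -addrA [t0 *: d + _]addrCA subrr addr0.
Qed.

Lemma line_scale (a d : V) (c : F) : c != 0 -> line a (c *: d) = line a d.
Proof.
move=> c0; apply/setP => y; apply/memlP/memlP => [[s ->]|[s ->]].
  by exists (s * c); rewrite scalerA.
by exists (s / c); rewrite scalerA mulfVK.
Qed.

Lemma line_dir (a d b e : V) : line a d = line b e -> col d e.
Proof.
move=> E.
have /memlP [t0 Hb] : b \in line a d by rewrite E line_id.
have /memlP [t1 He] : b + e \in line a d by rewrite E; apply/memlP; exists 1; rewrite scale1r.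
apply/existsP; exists (t1 - t0); apply/eqP.
have -> : e = (b + e) - b by rewrite addrC addKr.
by rewrite He Hb opprD addrACA subrr add0r scalerBl.
Qed.

Lemma scalel_inj (d : V) : d != 0 -> injective (fun t : F => t *: d).
Proof.
move=> d0 s t /eqP; rewrite -subr_eq0 -scalerBl scaler_eq0 (negbTE d0) orbF subr_eq0.
by move/eqP.
Qed.

Lemma card_line (a d : V) : d != 0 -> #|line a d| = #|F|.
Proof.
move=> d0; rewrite card_imset // => s t /addrI; exact: scalel_inj.
Qed.

Lemma line_in_pe (p e : V) : line p e \in pe e.
Proof. exact: imset_f. Qed.

Lemma pe_uniq (e p : V) m : m \in pe e -> p \in m -> m = line p e.
Proof. by move=> /imsetP [b _ ->] /line_shift ->. Qed.

Lemma is_aline_line (a d : V) : d != 0 -> is_aline (line a d).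
Proof.
move=> d0; apply/existsP; exists a; apply/existsP; exists d; by rewrite d0 eqxx.
Qed.

Lemma aline_ex (l : {set V}) : is_aline l -> exists a d, d != 0 /\ l = line a d.
Proof.
by move=> /existsP [a /existsP [d /andP [d0 /eqP ->]]]; exists a, d.
Qed.

Lemma pe_dir (d e : V) m : m \in pe d -> m \in pe e -> col d e.
Proof. by move=> /imsetP [a _ ->] /imsetP [b _]; apply: line_dir. Qed.

Lemma pe_spread (e : V) : e != 0 -> line_spread (pe e).
Proof.
move=> e0; split; [|split].
- by move=> l /imsetP [b _ ->]; apply: is_aline_line.
- apply/trivIsetP => A B HA HB AB; rewrite -setI_eq0; apply/eqP/setP => p.
  rewrite inE in_set0; apply/negbTE/negP => /andP [pA pB].
  by move: AB; rewrite (pe_uniq HA pA) (pe_uniq HB pB) eqxx.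
- apply/setP => p; rewrite inE; apply/bigcupP; exists (line p e); first exact: line_in_pe.
  exact: line_id.
Qed.


Lemma cardI_sum (T : finType) (A B : {set T}) :
  #|A :&: B| = (\sum_(m in B) (m \in A))%N.
Proof.
rewrite -sum1_card [LHS]big_mkcond [RHS]big_mkcond; apply: eq_bigr => m _.
by rewrite inE; case: (m \in A); case: (m \in B).
Qed.

Lemma col0 (d : V) : col d 0.
Proof. by apply/existsP; exists 0; rewrite scale0r. Qed.

Section Switch.
Variables (a d e : V).
Hypotheses (d0 : d != 0) (ncol : ~~ col d e).

Lemma e0 : e != 0.
Proof. by apply: contraNneq ncol => ->; apply: col0. Qed.

Definition Eset := [set line (a + t *: d) e | t : F].
Definition Dset := [set line (a + s *: e) d | s : F].
Definition Sw := (pe e :\: Eset) :|: Dset.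

Lemma injE : injective (fun t => line (a + t *: d) e).
Proof.
move=> t t' H /=.
have : a + t' *: d \in line (a + t *: d) e by rewrite H line_id.
case/memlP => s; rewrite -addrA => /addrI Hs.
have Hse : s *: e = (t' - t) *: d by rewrite scalerBl Hs [t *: d + _]addrC addrK.
case: (eqVneq s 0) => [s0|s0].
  move: Hse; rewrite s0 scale0r => /esym/eqP.
  by rewrite scaler_eq0 (negbTE d0) orbF subr_eq0 => /eqP ->.
exfalso; move/negP: ncol; apply; apply/existsP; exists (s^-1 * (t' - t)).
by rewrite -scalerA -Hse scalerA mulVf // scale1r.
Qed.

Lemma injD : injective (fun s => line (a + s *: e) d).
Proof.
move=> s s' H /=.
have : a + s' *: e \in line (a + s *: e) d by rewrite H line_id.
case/memlP => t; rewrite -addrA => /addrI Hs.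
have Htd : t *: d = (s' - s) *: e by rewrite scalerBl Hs [s *: e + _]addrC addrK.
case: (eqVneq t 0) => [t0|t0].
  move: Htd; rewrite t0 scale0r => /esym/eqP.
  by rewrite scaler_eq0 (negbTE e0) orbF subr_eq0 => /eqP ->.
exfalso.
have ss : s' - s != 0.
  apply: contra_neq t0 => ss; move/eqP: Htd; rewrite ss scale0r scaler_eq0 (negbTE d0) orbF.
  by move/eqP.
move/negP: ncol; apply; apply/existsP; exists ((s' - s)^-1 * t).
by rewrite -scalerA Htd scalerA mulVf // scale1r.
Qed.

Lemma key_notD A p s : A \in pe e :\: Eset -> p \in A -> p \in line (a + s *: e) d -> False.
Proof.
case/setDP => HA HE pA /memlP [t Hp].
have : A = line (a + t *: d) e.
  rewrite (pe_uniq HA pA); apply: line_shift; apply/memlP; exists s.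
  by rewrite Hp addrAC.
by move=> EA; move/negP: HE; apply; rewrite EA; apply: imset_f.
Qed.

Lemma D_pe m : m \in Dset -> m \in pe d.
Proof. by case/imsetP => s _ ->; apply: line_in_pe. Qed.

Lemma Sw_spread : line_spread Sw.
Proof.
split; [|split].
- move=> l; case/setUP => [/setDP [/imsetP [b _ ->] _]|/imsetP [s _ ->]].
    exact: is_aline_line e0.
  exact: is_aline_line.
- apply/trivIsetP => A B HA HB AB; rewrite -setI_eq0; apply/eqP/setP => p.
  rewrite inE in_set0; apply/negbTE/negP => /andP [pA pB].
  move: AB; case/setUP: HA => HA; case/setUP: HB => HB.
  + move: (HA) (HB) => /setDP [HA' _] /setDP [HB' _].
    by rewrite (pe_uniq HA' pA) (pe_uniq HB' pB) eqxx.
  + by move: HB => /imsetP [s _ EB]; rewrite EB in pB; case: (key_notD HA pA pB).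
  + by move: HA => /imsetP [s _ EA]; rewrite EA in pA; case: (key_notD HB pB pA).
  + by rewrite (pe_uniq (D_pe HA) pA) (pe_uniq (D_pe HB) pB) eqxx.
- apply/setP => p; rewrite inE; apply/bigcupP.
  case: (boolP (line p e \in Eset)) => HE.
    case/imsetP: HE => t _ Ht.
    have : p \in line (a + t *: d) e by rewrite -Ht line_id.
    case/memlP => s Hp.
    exists (line (a + s *: e) d); first by apply/setUP; right; apply: imset_f.
    by apply/memlP; exists t; rewrite Hp addrAC.
  exists (line p e); last exact: line_id.
  by apply/setUP; left; apply/setDP; split => //; apply: line_in_pe.
Qed.

Lemma switch_count (L : {set {set V}}) (x : nat) :
  (forall S : {set {set V}}, line_spread S -> #|L :&: S| = x) ->
  (\sum_t (line (a + t *: d) e \in L))%N = (\sum_s (line (a + s *: e) d \in L))%N.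
Proof.
move=> H.
have h1 := H _ (pe_spread e0).
have h2 := H _ Sw_spread.
have hE : #|L :&: Eset| = (\sum_t (line (a + t *: d) e \in L))%N.
  by rewrite cardI_sum big_imset //; move=> ? ? _ _; apply: injE.
have hD : #|L :&: Dset| = (\sum_s (line (a + s *: e) d \in L))%N.
  by rewrite cardI_sum big_imset //; move=> ? ? _ _; apply: injD.
rewrite -hE -hD.
have sub : Eset \subset pe e by apply/subsetP => m /imsetP [t _ ->]; apply: line_in_pe.
have h3 := cardsID Eset (L :&: pe e).
rewrite -setIA (setIidPr sub) -setIDA h1 in h3.
have h4 : L :&: (pe e :\: Eset) :&: (L :&: Dset) = set0.
  apply/setP => m; rewrite in_set0; apply/negbTE/negP => /setIP [/setIP [_ /setDP [Hm _]] /setIP [_ HD]].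
  by move/negP: ncol; apply; apply: (pe_dir (D_pe HD) Hm).
move: h2; rewrite /Sw setIUr cardsU h4 cards0 subn0 => h2.
move: h1 h2 h3 => _ h2 h3.
apply: (@addnI #|L :&: (pe e :\: Eset)|); rewrite h2 addnC h3 //.
Qed.

End Switch.

Lemma sum_eq1 (T : finType) (A : {pred T}) (c : T) :
  (\sum_(m in A) (m == c) = (c \in A))%N.
Proof.
case: (boolP (c \in A)) => cA.
  by rewrite (bigD1 c) //= eqxx big1 // => m /andP [_ /negbTE ->].
rewrite big1 // => m mA; case: eqP => // Emc.
by rewrite -Emc mA in cA.
Qed.

Lemma sum_cst (T : finType) (P : pred T) (k : nat) :
  (\sum_(i | P i) k = #|[set i | P i]| * k)%N.
Proof.
rewrite -sum_nat_const; apply: eq_bigl => i; by rewrite inE.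
Qed.

Lemma sum_mem (T : finType) (A : {set T}) : (\sum_p (p \in A) = #|A|)%N.
Proof.
rewrite -sum1_card [RHS]big_mkcond; apply: eq_bigr => p _; by case: (p \in A).
Qed.

Lemma sum_line (R : pzRingType) (a d : V) (g : V -> R) : d != 0 ->
  \sum_p (p \in line a d)%:R * g p = \sum_(t : F) g (a + t *: d).
Proof.
move=> d0.
have -> : \sum_p (p \in line a d)%:R * g p = \sum_(p in line a d) g p.
  rewrite [RHS]big_mkcond; apply: eq_bigr => p _.
  by case: (p \in line a d); rewrite ?mul1r ?mul0r.
rewrite big_imset /=; first by apply: eq_bigl.
move=> s t _ _ /addrI Hst; exact: (scalel_inj d0 Hst).
Qed.

Definition NZ := [set e : V | e != 0].
Definition dirs (m : {set V}) := [set e | m \in pe e] :&: NZ.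
Local Notation q := #|F|.

Lemma col_scale (d e : V) (s : F) : s != 0 -> col d (s *: e) = col d e.
Proof.
move=> s0; apply/existsP/existsP => [[c /eqP Hc]|[c /eqP ->]].
  exists (s^-1 * c); by rewrite -scalerA -Hc scalerA mulVf // scale1r.
by exists (s * c); rewrite scalerA.
Qed.

Lemma dirs_line (a d : V) : d != 0 ->
  dirs (line a d) = [set c *: d | c in [set~ (0 : F)]].
Proof.
move=> d0; apply/setP => e; rewrite !inE; apply/andP/imsetP.
  case=> /imsetP [b _ /line_dir /existsP [c /eqP ->]] ne.
  exists c => //; rewrite !inE; apply: contraNneq ne => ->; by rewrite scale0r.
case=> c; rewrite !inE => c0 ->; split; last by rewrite scaler_eq0 negb_or c0.
by rewrite -(line_scale a d c0); apply: line_in_pe.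
Qed.

Lemma card_dirs (m : {set V}) : is_aline m -> #|dirs m| = q.-1.
Proof.
case/aline_ex => a [d [d0 ->]]; rewrite dirs_line // card_imset ?cardsC1 //.
exact: scalel_inj.
Qed.

Lemma card_NZ : #|NZ| = (q ^ n).-1.
Proof.
have -> : NZ = [set~ 0] by apply/setP => e; rewrite !inE.
by rewrite cardsC1 card_mx mul1n.
Qed.

Section Main.
Variables (L : {set {set V}}) (x : nat).
Hypothesis HL : forall l, l \in L -> is_aline l.
Hypothesis H : forall S : {set {set V}}, line_spread S -> #|L :&: S| = x.

Lemma param_nat : (#|L| * q.-1 = (q ^ n).-1 * x)%N.
Proof.
have E1 : (\sum_(e in NZ) #|L :&: pe e| = (q ^ n).-1 * x)%N.
  rewrite -card_NZ -sum_nat_const; apply: eq_bigr => e; rewrite inE => e0.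
  exact: H (pe_spread e0).
rewrite -E1.
under eq_bigr do rewrite setIC cardI_sum.
rewrite exchange_big /= -sum_nat_const; apply: eq_bigr => m mL.
rewrite -(card_dirs (HL mL)) /dirs cardI_sum; apply: eq_bigr => e _.
by rewrite inE.
Qed.


Definition deg p := (\sum_(m in L) (p \in m))%N.

Lemma deg_dir p : (deg p * q.-1 = \sum_(e in NZ) (line p e \in L))%N.
Proof.
under [RHS]eq_bigr do rewrite -sum_eq1.
rewrite exchange_big /= /deg big_distrl /=; apply: eq_bigr => m mL.
case: (boolP (p \in m)) => pm /=.
  rewrite mul1n -(card_dirs (HL mL)) /dirs cardI_sum; apply: eq_bigr => e _.
  rewrite inE; congr (nat_of_bool _); apply/idP/idP => [He|/eqP ->]; last exact: line_in_pe.
  apply/eqP; exact: pe_uniq He pm.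
rewrite mul0n big1 // => e _; case: eqP => // Em.
by rewrite Em line_id in pm.
Qed.

Lemma sumT_cst (k : nat) : (\sum_(t : F) k = q * k)%N.
Proof. by rewrite sum_nat_const. Qed.


Section Line.
Variables (a d : V).
Hypothesis d0 : d != 0.
Let chi := (line a d \in L).
Let f (v : V) := (line (a + v) d \in L).
Definition Cset := [set v | col d v].
Let T := (\sum_(v | ~~ col d v) f v)%N.

Lemma card_Cset : #|Cset| = q.
Proof.
have -> : Cset = [set c *: d | c : F].
  apply/setP => v; rewrite inE; apply/existsP/imsetP => [[c /eqP ->]|[c _ ->]].
    by exists c.
  by exists c.
by rewrite card_imset //; exact: scalel_inj.
Qed.

Lemma f_col v : col d v -> f v = chi.
Proof.
case/existsP => c /eqP ->; rewrite /f /chi (@line_shift a d (a + c *: d)) //.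
by apply/memlP; exists c.
Qed.

Lemma sum_f : (\sum_v f v = q * x)%N.
Proof.
have E : forall v, nat_of_bool (f v) = (\sum_(m in L :&: pe d) ((a + v)%R \in m))%N.
  move=> v; rewrite /f.
  have -> : line (a + v) d \in L = (line (a + v) d \in L :&: pe d).
    by rewrite inE line_in_pe andbT.
  rewrite -sum_eq1; apply: eq_bigr => m; rewrite inE => /andP [_ Hm].
  congr (nat_of_bool _); apply/idP/idP => [/eqP ->|Hv]; first exact: line_id.
  apply/eqP; exact: pe_uniq Hm Hv.
under eq_bigr do rewrite E.
rewrite exchange_big /= (eq_bigr (fun=> q)).
  by rewrite sum_nat_const (H (pe_spread d0)) mulnC.
move=> m; rewrite inE => /andP [_ /imsetP [b _ ->]].
by rewrite -(card_line b d0) -sum_mem [RHS](reindex_inj (addrI a)).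
Qed.


Lemma T_eq : (q * chi + T = q * x)%N.
Proof.
rewrite -(sum_f) (bigID (col d)) /= /T; congr (_ + _).
rewrite (eq_bigr (fun=> nat_of_bool chi)); last by move=> v /f_col ->.
by rewrite sum_cst -card_Cset.
Qed.

Lemma Sdeg : ((\sum_t deg (a + t *: d)%R) * q.-1 =
   q.-1 * (q * chi) + (#|~: Cset| * chi + q.-1 * T))%N.
Proof.
rewrite big_distrl /=.
under eq_bigr do rewrite deg_dir.
rewrite exchange_big /= (bigID (col d)) /=.
congr (_ + _).
- rewrite (eq_bigr (fun=> q * chi)%N).
    rewrite sum_cst; congr (_ * _).
    rewrite -(card_dirs (is_aline_line a d0)); apply: eq_card => e; rewrite !inE.
    apply/idP/idP => [/andP [e0 /existsP [c /eqP Ec]]|/andP [/imsetP [b _ /line_dir Hc] e0]].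
      have c0 : c != 0 by apply: contraNneq e0 => c0; rewrite Ec c0 scale0r.
      by rewrite e0 andbT Ec -(line_scale a d c0) line_in_pe.
    by rewrite e0 Hc.
  move=> e /andP [e0 /existsP [c /eqP Ec]]; rewrite inE in e0.
  have c0 : c != 0 by apply: contraNneq e0 => c0; rewrite Ec c0 scale0r.
  rewrite -sumT_cst; apply: eq_bigr => t _.
  rewrite Ec (line_scale _ d c0) (@line_shift a d) //.
  by apply/memlP; exists t.
rewrite (eq_bigl (fun e => ~~ col d e)); last first.
  move=> e; rewrite inE; case: (eqVneq e 0) => [->|e0] /=; last by [].
  by rewrite col0.
rewrite (eq_bigr (fun e => \sum_s f (s *: e))%N); last first.
  move=> e ne; exact: (switch_count a d0 ne H).
rewrite exchange_big /= (bigD1 0) //=.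
rewrite (eq_bigr (fun=> nat_of_bool chi)); last by move=> e _; rewrite /f scale0r addr0.
rewrite sum_cst; congr (_ * _ + _).
  by apply: eq_card => e; rewrite !inE.
rewrite (eq_bigr (fun=> T)).
  rewrite sum_cst; congr (_ * _); rewrite -(cardsC1 (0 : F)); apply: eq_card => s; rewrite !inE.
  done.
move=> s s0; rewrite /T [RHS](reindex_inj (scalerI s0)) /=.
by apply: eq_bigl => v; rewrite col_scale.
Qed.

End Line.

End Main.
End Geo.

Unset Implicit Arguments.

Lemma alg (R : fieldType) (P Q Kr S C X Tr : R) : Kr != 0 ->
  S * P = P * (Q * C) + (Kr * C + P * Tr) -> Q * C + Tr = Q * X ->
  C = P / Kr * (S - X * Q).
Proof.
move=> K0 hS hT.
have E : P * (S - X * Q) = Kr * C.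
  rewrite mulrBr [P * S]mulrC hS [X * Q]mulrC -hT; ring.
by rewrite mulrAC E mulrC mulKf.
Qed.

Theorem theorem5p1 (F : finFieldType) (n : nat) (R : realType)
    (L : {set {set 'rV[F]_n}}) (x : nat) :
  (3 <= n)%N ->
  (forall l, l \in L -> is_aline l) ->
  (forall S : {set {set 'rV[F]_n}}, line_spread S -> #|L :&: S| = x) ->
  CL_class R L /\ CL_parameter R L = x%:R.
Proof.
move=> n3 HL H.
have q1 : (1 < #|F|)%N := card_finNzRing_gt1 F.
have qn : (#|F| < #|F| ^ n)%N.
  by rewrite -{1}(expn1 #|F|) ltn_exp2l //; apply: leq_trans n3.
have hq1 : (#|F|.-1)%:R = #|F|%:R - 1 :> R.
  by rewrite -{2}(prednK (ltnW q1)) -addn1 natrD addrK.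
split.
- pose K := (#|F| ^ n - #|F|)%N.
  have K0 : K%:R != 0 :> R by rewrite pnatr_eq0 /K subn_eq0 -ltnNge.
  exists (fun p => (#|F|.-1)%:R / K%:R * ((deg L p)%:R - x%:R)).
  move=> l /aline_ex [a [d [d0 ->]]].
  rewrite /charvec /incidence sum_line //.
  have hK : #|~: Cset d| = K.
    have cV : #|'rV[F]_n| = (#|F| ^ (1 * n))%N := card_mx F 1 n; rewrite mul1n in cV.
    have E : (#|F| + #|~: Cset d| = #|F| ^ n)%N by rewrite -{1}(card_Cset d0) cardsC; exact: cV.
    by rewrite /K -E addKn.

  have hS := Sdeg HL H a d0; rewrite hK in hS.
  have hT := T_eq H a d0.
  have hS' := congr1 (fun k : nat => k%:R : R) hS.
  have hT' := congr1 (fun k : nat => k%:R : R) hT.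
  rewrite /= !natrD !natrM natr_sum in hS'.
  rewrite /= !natrD !natrM in hT'.
  rewrite -mulr_sumr sumrB sumr_const.
  have cF : forall T : finType, #|[pred _ : T | true]| = #|T| by move=> T; apply: eq_card.
  rewrite cF -[x%:R *+ _]mulr_natr.
  exact: alg K0 hS' hT'.
- rewrite /CL_parameter.
  have hp := param_nat HL H.
  have qn0 : (0 < #|F| ^ n)%N := ltn_trans (ltnW q1) qn.
  have hqn : ((#|F| ^ n).-1)%:R = #|F|%:R ^+ n - 1 :> R.
    by rewrite -natrX -{2}(prednK qn0) -addn1 natrD addrK.
  have nz : ((#|F| ^ n).-1)%:R != 0 :> R.
    rewrite pnatr_eq0 -lt0n; lia.
  by rewrite -hq1 -hqn -natrM hp natrM [X in X / _]mulrC mulfK.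
Qed.
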